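(* Let $p>3$ be a prime. Then for each $k=1,2,\ldots,(p-1)/2$, $$\sum_{j=2}^{p-2k}\frac{\binom{k+j-1}{k}}{k+j}\equiv(-1)^k\left(\frac32\sum_{j=1}^k\frac{\binom{2j}{j}}{j}-\frac{\binom{2k}{k}}{k}\right)-\frac{1}{k+1}\pmod p.$$
   Context: Congruences between rational numbers are understood in the ring of rationals whose denominators are coprime to $p$. *)

(* Defs.v *)
From mathcomp Require Import all_boot all_order all_algebra.
Set Implicit Arguments. Unset Strict Implicit. Unset Printing Implicit Defensive.
Import Order.TTheory GRing.Theory Num.Theory.
Local Open Scope ring_scope.

Definition in_Zp (p : nat) (r : rat) : bool := coprime `|denq r|%N p.

Definition rat_congr (p : nat) (a b : rat) : Prop :=
  [/\ in_Zp p a, in_Zp p b & (p%:Z %| numq (a - b))%Z].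

(* Main.v *)
Require Import Defs.
From mathcomp Require Import all_boot all_order all_algebra.
From mathcomp Require Import ring zify.
Import Order.TTheory GRing.Theory Num.Theory.
Local Open Scope ring_scope.
Set Implicit Arguments. Unset Strict Implicit.

Section Transfer.
Variable p : nat.
Hypothesis pr : prime p.

Definition phi (r : rat) : 'F_p := (numq r)%:~R / (denq r)%:~R.

Lemma intFp0 (z : int) : ((z%:~R : 'F_p) == 0) = (p %| z)%Z.
Proof.
case: z => n; rewrite ?NegzE ?mulrNz ?oppr_eq0 /= -(dvdn_pcharf (pchar_Fp pr)) dvdzE //.
Qed.

Lemma phi_frac (r : rat) (a b : int) :
  r * b%:~R = a%:~R -> (b%:~R : 'F_p) != 0 -> in_Zp p r /\ phi r = a%:~R / b%:~R.
Proof.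
move=> e bn0.
have E : numq r * b = a * denq r.
  apply: (@intr_inj rat); rewrite !rmorphM /= numqE -e; ring.
have dn : ~~ (p %| denq r)%Z.
  apply: contra bn0 => pd; rewrite intFp0; apply: dvdz_trans pd _.
  have : (denq r %| numq r * b)%Z by rewrite E dvdz_mull.
  rewrite Gauss_dvdzr //; rewrite coprimezE coprime_sym; exact: coprime_num_den.
have dF : ((denq r)%:~R : 'F_p) != 0 by rewrite intFp0.
split.
  rewrite /in_Zp coprime_sym prime_coprime //; by rewrite dvdzE in dn.
apply/eqP; rewrite /phi eqr_div // -!intrM E.
by [].
Qed.

Definition ok r (x : 'F_p) := in_Zp p r /\ phi r = x.

Lemma ok_den r : in_Zp p r -> ((denq r)%:~R : 'F_p) != 0.
Proof.
rewrite /in_Zp coprime_sym prime_coprime // intFp0 dvdzE /=.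
by [].
Qed.

Lemma okD r s x y : ok r x -> ok s y -> ok (r + s) (x + y).
Proof.
move=> [hr <-] [hs <-].
have [] := @phi_frac (r + s) (numq r * denq s + numq s * denq r) (denq r * denq s).
- rewrite !rmorphM !rmorphD /= !rmorphM /= !numqE; ring.
- by rewrite rmorphM mulf_neq0 // ok_den.
move=> h e; split => //; rewrite e.
rewrite /phi !(rmorphM, rmorphD) /=; field.
by rewrite !ok_den.
Qed.

Lemma okM r s x y : ok r x -> ok s y -> ok (r * s) (x * y).
Proof.
move=> [hr <-] [hs <-].
have [] := @phi_frac (r * s) (numq r * numq s) (denq r * denq s).
- rewrite !rmorphM /= !numqE; ring.
- by rewrite rmorphM mulf_neq0 // ok_den.
move=> h e; split => //; rewrite e.
rewrite /phi !(rmorphM, rmorphD) /=; field.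
by rewrite !ok_den.
Qed.

Lemma okN r x : ok r x -> ok (- r) (- x).
Proof.
move=> [hr <-].
have [] := @phi_frac (- r) (- numq r) (denq r).
- rewrite rmorphN /= numqE; ring.
- by rewrite ok_den.
move=> h e; split => //; rewrite e.
rewrite /phi rmorphN /=; field.
by rewrite !ok_den.
Qed.

Lemma ok_nat n : ok n%:R n%:R.
Proof.
have [] := @phi_frac n%:R n 1.
- by rewrite mulr1.
- by rewrite oner_neq0.
by move=> h e; split => //; rewrite e divr1.
Qed.

Lemma okV_nat n : (n%:R : 'F_p) != 0 -> ok (n%:R^-1) (n%:R^-1).
Proof.
move=> nz.
have [] := @phi_frac (n%:R^-1) 1 n.
- rewrite mulVf //. rewrite pnatr_eq0. apply: contra nz => /eqP ->. by [].
- by [].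
by move=> h e; split => //; rewrite e mul1r.
Qed.

Lemma okX r x k : ok r x -> ok (r ^+ k) (x ^+ k).
Proof.
move=> h; elim: k => [|k IH]; first exact: (ok_nat 1).
by rewrite !exprS; apply: okM.
Qed.

Lemma ok_sum m n (f : nat -> rat) (g : nat -> 'F_p) :
  (forall i, (m <= i < n)%N -> ok (f i) (g i)) ->
  ok (\sum_(m <= i < n) f i) (\sum_(m <= i < n) g i).
Proof.
elim: n => [|n IH] H.
  by rewrite !big_geq //; exact: (ok_nat 0).
case: (leqP m n) => hmn.
  rewrite !big_nat_recr //=; apply: okD; first by apply: IH => i /andP[a b]; apply: H; rewrite a ltnS ltnW.
  by apply: H; rewrite hmn ltnSn.
by rewrite !big_geq //; exact: (ok_nat 0).
Qed.

Lemma ok_congr a b x : ok a x -> ok b x -> rat_congr p a b.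
Proof.
move=> ha hb; have [hd hp] := okD ha (okN hb).
split; [by case: ha | by case: hb |].
rewrite subrr in hp; move: hp; rewrite /phi => /eqP.
rewrite mulf_eq0 invr_eq0 (negPf (ok_den hd)) orbF intFp0.
by [].
Qed.
End Transfer.

Lemma altA (R : comNzRingType) N k :
  ('C(N, k)%:R : R) = \sum_(0 <= j < k.+1) (-1) ^+ (k + j) * 'C(N.+1, j)%:R.
Proof.
elim: k => [|k IH]; first by rewrite big_nat1 /= !bin0 mulr1.
rewrite big_nat_recr //=.
have -> : \sum_(0 <= i < k.+1) (-1) ^+ (k.+1 + i) * ('C(N.+1, i)%:R : R)
   = - \sum_(0 <= j < k.+1) (-1) ^+ (k + j) * 'C(N.+1, j)%:R.
  rewrite -sumrN; apply: eq_bigr => i _; by rewrite addSn exprS mulN1r mulNr.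
by rewrite -IH binS natrD -/(k.+1 + k.+1)%N addnn -mul2n exprM sqrrN !expr1n mul1r addrCA addNr addr0.


Qed.

Lemma identB (F : fieldType) M N k :
  (forall i, (0 < i <= M)%N -> i%:R != 0 :> F) -> (N <= M)%N -> (k <= M)%N ->
  \sum_(1 <= n < N.+1) ('C(n.-1, k)%:R / n%:R : F)
  = (-1) ^+ k * \sum_(1 <= n < N.+1) n%:R^-1
    + \sum_(0 <= j < k) (-1) ^+ (k + j).+1 * 'C(N, j.+1)%:R / j.+1%:R.
Proof.
move=> hM; elim: N => [|N IH] hN hk.
  rewrite big_geq // [in RHS]big_geq // mulr0 add0r big1 // => j _; by rewrite bin0n /= mulr0 mul0r.
rewrite big_nat_recr //= [in RHS]big_nat_recr //= IH ?(ltnW hN) //.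
have h1 : (N.+1%:R : F) != 0 by apply: hM; rewrite ltn0Sn hN.
have -> : \sum_(0 <= j < k) (-1) ^+ (k + j).+1 * ('C(N.+1, j.+1)%:R : F) / j.+1%:R
   = \sum_(0 <= j < k) (-1) ^+ (k + j).+1 * 'C(N, j.+1)%:R / j.+1%:R
   + \sum_(0 <= j < k) (-1) ^+ (k + j).+1 * 'C(N.+1, j.+1)%:R / N.+1%:R.
  rewrite -big_split /=; apply: eq_big_nat => j /andP[_ hj].
  have hj1 : (j.+1%:R : F) != 0 by apply: hM; rewrite ltn0Sn; lia.
  have e : ('C(N, j)%:R : F) = 'C(N.+1, j.+1)%:R * j.+1%:R / N.+1%:R.
    apply: (mulIf h1); rewrite mulfVK // -!natrM; congr (_%:R); by rewrite mulnC (mul_bin_diag N.+1 j) mulnC.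
  have b : ('C(N.+1, j.+1)%:R : F) = 'C(N, j.+1)%:R + 'C(N.+1, j.+1)%:R * j.+1%:R / N.+1%:R.
    by rewrite -e -natrD -binS.
  rewrite {1}b; set s := (-1) ^+ _; field; by rewrite !nat1r h1 hj1.
have e2 : ('C(N, k)%:R : F) = (-1) ^+ k + \sum_(0 <= j < k) (-1) ^+ (k + j).+1 * 'C(N.+1, j.+1)%:R.
  rewrite altA big_nat_recl // addn0 bin0 mulr1; congr (_ + _); apply: eq_bigr => i _; by rewrite addnS.
rewrite e2 -!mulr_suml /=.
set a := (-1) ^+ k; field; by rewrite ?nat1r h1.
Qed.

Lemma hockey K m : (1 + \sum_(0 <= j < m) 'C(K.+1 + j, j.+1) = 'C(K.+1 + m, m))%N.
Proof.
elim: m => [|m IH]; first by rewrite big_geq // addn0 bin0.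
rewrite big_nat_recr //= addnA IH addnS binS; lia.
Qed.

Lemma identE (F : fieldType) M K :
  (forall i, (0 < i <= M)%N -> i%:R != 0 :> F) -> (K.+2 <= M)%N ->
  \sum_(1 <= n < K.+1) (n%:R^-1 : F) + \sum_(0 <= j < K.+1) 'C(K.+1 + j, j.+1)%:R / j.+1%:R
  = 3%:R / 2%:R * \sum_(1 <= j < K.+2) ('C(2 * j, j)%:R / j%:R) - 'C(2 * K.+1, K.+1)%:R / K.+1%:R.
Proof.
move=> hM; elim: K => [|K IH] hK.
  have h2 : (2%:R : F) != 0 by apply: hM; lia.
  rewrite big_geq // big_nat1 big_nat1 /= add0r.
  have -> : 'C(2 * 1, 1) = 2%N by [].
  rewrite binn; field; by rewrite oner_neq0 h2.
have h1 : (K.+1%:R : F) != 0 by apply: hM; lia.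
have h2' : (K.+2%:R : F) != 0 by apply: hM; lia.
have h2 : (2%:R : F) != 0 by apply: hM; lia.
have IH' := IH (ltnW hK).
have S1 : \sum_(0 <= j < K.+2) ('C(K.+2 + j, j.+1)%:R / j.+1%:R : F)
   = \sum_(0 <= j < K.+1) 'C(K.+1 + j, j.+1)%:R / j.+1%:R
     + ('C(2 * K.+1, K.+1)%:R - 1) / K.+1%:R + 'C(2 * K.+1 + 1, K.+2)%:R / K.+2%:R.
  rewrite big_nat_recr //=; congr (_ + _); last first.
    by congr (_%:R / _); congr 'C(_, _); lia.
  have -> : ('C(2 * K.+1, K.+1)%:R : F) - 1 = (\sum_(0 <= j < K.+1) 'C(K.+1 + j, j.+1))%:R.
    have -> : (2 * K.+1 = K.+1 + K.+1)%N by lia.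
    rewrite -(hockey K K.+1).
    by rewrite natrD addrAC subrr add0r.
  rewrite natr_sum mulr_suml -big_split /=; apply: eq_big_nat => j /andP[_ hj].
  have hj1 : (j.+1%:R : F) != 0 by apply: hM; lia.
  have -> : (K.+2 + j = (K.+1 + j).+1)%N by lia.
  rewrite binS natrD.
  have e : ('C(K.+1 + j, j)%:R : F) = 'C(K.+1 + j, j.+1)%:R * j.+1%:R / K.+1%:R.
    apply: (mulIf h1); rewrite mulfVK // -!natrM; congr (_%:R).
    by rewrite mulnC [in RHS]mulnC mul_bin_left addnK.
  rewrite e; field; by rewrite ?nat1r hj1 h1.
rewrite S1 (big_nat_recr K.+1) //= [in RHS]big_nat_recr //=.
have Cd : ('C(2 * K.+2, K.+2)%:R : F) = 2%:R * 'C(2 * K.+1 + 1, K.+2)%:R.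
  have -> : (2 * K.+2 = (2 * K.+1 + 1).+1)%N by lia.
  rewrite binS natrD.
  have -> : 'C(2 * K.+1 + 1, K.+1) = 'C(2 * K.+1 + 1, K.+2).
    rewrite -bin_sub; last lia.
    congr 'C(_, _); lia.
  by rewrite -mulr2n mulr_natl.
rewrite Cd.
have : \sum_(1 <= n < K.+1) (n%:R^-1 : F) + \sum_(0 <= j < K.+1) 'C(K.+1 + j, j.+1)%:R / j.+1%:R
  = 3%:R / 2%:R * \sum_(1 <= j < K.+2) ('C(2 * j, j)%:R / j%:R) - 'C(2 * K.+1, K.+1)%:R / K.+1%:R by [].
move: IH' => _.
set A := \sum_(1 <= n < K.+1) (n%:R^-1 : F).
set B := \sum_(0 <= j < K.+1) _.
set C := \sum_(1 <= j < K.+2) _.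
move=> IH2.
have -> : A = 3%:R / 2%:R * C - 'C(2 * K.+1, K.+1)%:R / K.+1%:R - B by rewrite -IH2; ring.
field; by rewrite -!natrD nat1r add2n h1 h2 h2'.
Qed.

Section Fp.
Variable p : nat.
Hypothesis pr : prime p.

Lemma Fp_nz i : (0 < i < p)%N -> (i%:R : 'F_p) != 0.
Proof.
move=> /andP[h1 h2]; rewrite -(dvdn_pcharf (pchar_Fp pr)) gtnNdvd //.
Qed.

Lemma FpB n : (n <= p)%N -> ((p - n)%:R : 'F_p) = - n%:R.
Proof. by move=> h; rewrite natrB // pchar_Fp_0 // sub0r. Qed.

Lemma Hp m : (2 < p)%N -> (m < p)%N ->
  \sum_(1 <= n < p - m) (n%:R^-1 : 'F_p) = \sum_(1 <= n < m.+1) n%:R^-1.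
Proof.
move=> p2; elim: m => [|m IH] hm.
  rewrite subn0 [in RHS]big_geq //.
  set S := \sum_(1 <= n < p) _.
  have e : S = - S.
    rewrite {1}/S big_nat_rev /= /S -sumrN; apply: eq_big_nat => i /andP[h1 h2].
    have -> : (1 + p - i.+1 = p - i)%N by lia.
    rewrite FpB ?invrN //; lia.
  have h2 : (2%:R : 'F_p) != 0 by apply: Fp_nz; lia.
  have : (2%:R : 'F_p) * S = 0 by rewrite mulr2n mulrDl !mul1r {1}e addNr.
  by move/eqP; rewrite mulf_eq0 (negPf h2) /= => /eqP.
have hm' : (m < p)%N by lia.
have IH2 := IH hm'.
rewrite (_ : (p - m = (p - m.+1).+1)%N) in IH2; last lia.
rewrite big_nat_recr /= in IH2; last lia.
by rewrite [in RHS]big_nat_recr //= -IH2 (FpB (ltnW hm)) invrN addrNK.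
Qed.
Lemma Dbin k j : (0 < k)%N -> (k + j < p)%N ->
  ('C(p - k, j.+1)%:R : 'F_p) = (-1) ^+ j.+1 * 'C(k + j, j.+1)%:R.
Proof.
move=> hk; elim: j => [|j IH] h.
  rewrite addn0 !bin1 expr1 mulN1r FpB //; lia.
have h2 : (j.+2%:R : 'F_p) != 0 by apply: Fp_nz; lia.
apply: (mulfI h2).
rewrite -natrM mul_bin_left natrM.
rewrite IH; last lia.
have e : ('C(k + j.+1, j.+2)%:R : 'F_p) * j.+2%:R = (k + j.+1)%:R * 'C(k + j, j.+1)%:R.
  rewrite -!natrM; congr (_%:R).
  have := mul_bin_diag (k + j.+1) j.+1.
  rewrite (_ : (k + j.+1).-1 = k + j)%N; last lia.
  by move=> ->; rewrite mulnC.
rewrite [in RHS]mulrCA [in RHS](mulrC (j.+2%:R)) e.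
have -> : ((p - k - j.+1)%:R : 'F_p) = - (k + j.+1)%:R.
  rewrite -subnDA FpB //; lia.
rewrite !exprS; set s := (-1) ^+ j; ring.
Qed.
End Fp.

Unset Implicit Arguments.

Theorem lemma2p3 (p k : nat) :
  prime p -> (3 < p)%N -> (1 <= k)%N -> (k <= (p - 1)./2)%N ->
  rat_congr p
    (\sum_(2 <= j < (p - 2 * k).+1) ('C(k + j - 1, k)%:R / (k + j)%:R : rat))
    ((-1) ^+ k * ((3%:R / 2%:R) * \sum_(1 <= j < k.+1) ('C(2 * j, j)%:R / j%:R)
                  - 'C(2 * k, k)%:R / k%:R)
     - 1 / (k.+1)%:R).
Proof.
move=> pr p3 hk1; rewrite geq_half_double -mul2n => hk2.
have nz : forall i, (0 < i <= p.-1)%N -> (i%:R : 'F_p) != 0.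
  move=> i hi; apply: Fp_nz => //; lia.
have ok1 : @ok p 1 1 by exact: (ok_nat pr 1).
have okR : @ok p ((-1) ^+ k * ((3%:R / 2%:R) * \sum_(1 <= j < k.+1) ('C(2 * j, j)%:R / j%:R)
                  - 'C(2 * k, k)%:R / k%:R) - 1 / (k.+1)%:R)
   ((-1) ^+ k * ((3%:R / 2%:R) * \sum_(1 <= j < k.+1) ('C(2 * j, j)%:R / j%:R)
                  - 'C(2 * k, k)%:R / k%:R) - 1 / (k.+1)%:R).
  apply: (okD pr); last first.
    apply: (okN pr); apply: (okM pr); first exact ok1.
    apply: (okV_nat pr); apply: nz; lia.
  apply: (okM pr); first by apply: (okX pr); apply: (okN pr).
  apply: (okD pr); last first.
    apply: (okN pr); apply: (okM pr); first exact: (ok_nat pr).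
    apply: (okV_nat pr); apply: nz; lia.
  apply: (okM pr).
    apply: (okM pr); first exact: (ok_nat pr).
    apply: (okV_nat pr); apply: nz; lia.
  apply: (ok_sum pr) => j hj; apply: (okM pr); first exact: (ok_nat pr).
  apply: (okV_nat pr); apply: nz; lia.
apply: (ok_congr pr _ okR).
have -> : ((-1) ^+ k * ((3%:R / 2%:R) * \sum_(1 <= j < k.+1) ('C(2 * j, j)%:R / j%:R)
                  - 'C(2 * k, k)%:R / k%:R) - 1 / (k.+1)%:R : 'F_p) =
   \sum_(2 <= j < (p - 2 * k).+1) ('C(k + j - 1, k)%:R / (k + j)%:R); last first.
  apply: (ok_sum pr) => j hj; apply: (okM pr); first exact: (ok_nat pr).
  apply: (okV_nat pr); apply: nz; lia.
clear okR ok1.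
case: k hk1 hk2 => [//|K] _ hk2.
have L1 : \sum_(1 <= n < (p - K.+1).+1) ('C(n.-1, K.+1)%:R / n%:R : 'F_p)
   = 1 / K.+2%:R + \sum_(2 <= j < (p - 2 * K.+1).+1) ('C(K.+1 + j - 1, K.+1)%:R / (K.+1 + j)%:R).
  rewrite (@big_cat_nat _ _ _ K.+3) //=; last lia.
  rewrite big_nat_recr //= big_nat_cond big1; last first.
    move=> i /andP[/andP[_ hi] _]; rewrite bin_small ?mul0r //; case: i hi => //= i; lia.
  rewrite binn add0r (_ : K.+3 = 2 + K.+1)%N // big_addn.
  rewrite (_ : ((p - K.+1).+1 - K.+1 = (p - 2 * K.+1).+1)%N); last lia.
  congr (_ + _); apply: eq_big_nat => i _; rewrite (addnC i) -subn1 //.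
have L2 : \sum_(2 <= j < (p - 2 * K.+1).+1) ('C(K.+1 + j - 1, K.+1)%:R / (K.+1 + j)%:R : 'F_p)
   = \sum_(1 <= n < (p - K.+1).+1) ('C(n.-1, K.+1)%:R / n%:R) - 1 / K.+2%:R.
  by rewrite L1 addrAC subrr add0r.
rewrite L2 (@identB _ p.-1) //; try lia.
have HH := @Hp p pr K ltac:(lia) ltac:(lia).
rewrite (_ : (p - K = (p - K.+1).+1)%N) in HH; last lia.
rewrite HH.
have S2 : \sum_(0 <= j < K.+1) (-1) ^+ (K.+1 + j).+1 * ('C(p - K.+1, j.+1)%:R : 'F_p) / j.+1%:R
   = (-1) ^+ K.+1 * \sum_(0 <= j < K.+1) 'C(K.+1 + j, j.+1)%:R / j.+1%:R.
  rewrite mulr_sumr; apply: eq_big_nat => j /andP[_ hj]; rewrite (Dbin pr) //; last lia.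
  rewrite mulrA -exprD (_ : ((K.+1 + j).+1 + j.+1 = K.+1 + 2 * j.+1)%N); last lia.
  rewrite exprD exprM sqrrN !expr1n mulr1 mulrA //.
rewrite S2.
have HE := @identE _ p.-1 K nz ltac:(lia).
rewrite -HE.
set s := (-1) ^+ K.+1.
set A := \sum_(1 <= n < K.+1) _.
set B := \sum_(0 <= j < K.+1) _.
ring.
Qed.
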